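(* Let $\mathcal L:\mathbb F^{q\times q}\to\mathbb F^{n\times n}$ be $*$-linear with Choi matrix $\mathbb L$ and matricization $L=[L_{ij}]$, and set $m=\operatorname{rank}\mathbb L$. Let $L_1,\ldots,L_m$ and $L_1',\ldots,L_m'$ in $\mathbb F^{n\times q}$ both span $\operatorname{span}\{L_{ij}:1\le i\le n,1\le j\le q\}$. Let $A_1,\ldots,A_m$, $\mathbb H$ be obtained from $L_1,\ldots,L_m$ by the construction below, and $A_1',\ldots,A_m'$, $\mathbb H'$ likewise from $L_1',\ldots,L_m'$. Then there is an invertible $\Phi\in\mathbb F^{m\times m}$ with $$\begin{bmatrix}L_1\\ \vdots\\ L_m\end{bmatrix}=(\Phi\otimes I_n)\begin{bmatrix}L_1'\\ \vdots\\ L_m'\end{bmatrix},\qquad (\Phi^*\otimes I_n)\begin{bmatrix}A_1\\ \vdots\\ A_m\end{bmatrix}=\begin{bmatrix}A_1'\\ \vdots\\ A_m'\end{bmatrix},\qquad \mathbb H=\Phi\mathbb H'\Phi^*.$$ In fact one may take $\Phi=[\vec{\mathbf 1}_n^*(B_k\circ\overline{A_l'})\vec{\mathbf 1}_q]_{k,l=1}^m$.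
   Context: $\mathbb F\in\{\mathbb R,\mathbb C\}$; $\otimes$ is the Kronecker product, $\circ$ the Hadamard product, $\vec{\mathbf 1}_p$ the all-ones vector. For $T\in\mathbb F^{r\times s}$, $\operatorname{vec}_{r\times s}(T)$ is column-stacking vectorization. For linear $\mathcal L:\mathbb F^{q\times q}\to\mathbb F^{n\times n}$: matricization $L\in\mathbb F^{n^2\times q^2}$ with $L\operatorname{vec}(V)=\operatorname{vec}(\mathcal L(V))$, written as $L=[L_{ij}]$, $1\le i\le n$, $1\le j\le q$, blocks $L_{ij}\in\mathbb F^{n\times q}$; Choi matrix $\mathbb L=[\mathcal L(\mathcal E^{(q)}_{ij})]_{i,j=1}^q$ where $\mathcal E^{(q)}_{ij}$ are standard basis matrices. $*$-linear means $\mathcal L(V^* )=\mathcal L(V)^*$. Construction: given $L_1,\ldots,L_m$ spanning $\operatorname{span}\{L_{ij}\}$ ($m=\operatorname{rank}\mathbb L$), let $L_{ij}=\sum_k\alpha^{ij}_kL_k$ (unique scalars) and $L_k=\sum_{i,j}\beta^k_{ij}L_{ij}$ (any choice); $A_k$ has $(i,j)$ entry $\overline{\alpha^{ij}_k}$, $B_k$ has $(i,j)$ entry $\beta^k_{ij}$, and $\mathbb H=[\vec{\mathbf 1}_n^*(B_k\circ\overline{L_l})\vec{\mathbf 1}_q]_{k,l=1}^m$. Analogously $\alpha'^{ij}_k,\beta'^k_{ij},A_k',B_k',\mathbb H'$ for $L_1',\ldots,L_m'$. *)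

(* Defs.v *)
From HB Require Import structures.
From mathcomp Require Import all_boot all_order all_algebra.
From mathcomp Require Import mxtens.
Set Implicit Arguments. Unset Strict Implicit. Unset Printing Implicit Defensive.
Import Order.TTheory GRing.Theory Num.Theory.
Local Open Scope ring_scope.

(* Throughout, [cj : F -> F] is the conjugation of the scalar field:
   the identity for F = R, complex conjugation for F = C. *)

Definition cadj (F : fieldType) (cj : F -> F) r s (A : 'M[F]_(r, s)) : 'M[F]_(s, r) :=
  map_mx cj A^T.

Definition cbar (F : fieldType) (cj : F -> F) r s (A : 'M[F]_(r, s)) : 'M[F]_(r, s) :=
  map_mx cj A.

Definition star_linear (F : fieldType) (cj : F -> F) q n
  (L : 'M[F]_q -> 'M[F]_n) : Prop :=
  forall V : 'M[F]_q, L (cadj cj V) = cadj cj (L V).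

(* column-stacking vectorization vec_{r x s}(T) : index  c*r + a  <-> entry T a c *)
Definition cvec (F : fieldType) r s (T : 'M[F]_(r, s)) : 'cV[F]_(s * r) :=
  \col_k T (mxtens_unindex k).2 (mxtens_unindex k).1.

Definition is_matricization (F : fieldType) q n (L : 'M[F]_q -> 'M[F]_n)
  (M : 'M[F]_(n * n, q * q)) : Prop :=
  forall V : 'M[F]_q, M *m cvec V = cvec (L V).

Definition mblock (F : fieldType) q n (M : 'M[F]_(n * n, q * q)) (i : 'I_n) (j : 'I_q)
  : 'M[F]_(n, q) :=
  \matrix_(a < n, b < q) M (mxtens_index (i, a)) (mxtens_index (j, b)).

Definition choi (F : fieldType) q n (L : 'M[F]_q -> 'M[F]_n) : 'M[F]_(q * n, q * n) :=
  \matrix_(r, c) L (delta_mx (mxtens_unindex r).1 (mxtens_unindex c).1)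
                   (mxtens_unindex r).2 (mxtens_unindex c).2.

Definition stack (F : fieldType) m n q (X : 'I_m -> 'M[F]_(n, q)) : 'M[F]_(m * n, q) :=
  \matrix_(r, c) X (mxtens_unindex r).1 (mxtens_unindex r).2 c.

Definition hadamard (F : fieldType) r s (A B : 'M[F]_(r, s)) : 'M[F]_(r, s) :=
  map2_mx *%R A B.

Definition ones (F : fieldType) r : 'cV[F]_r := const_mx 1.

Definition sandwich (F : fieldType) (cj : F -> F) r s (A : 'M[F]_(r, s)) : F :=
  (cadj cj (ones F r) *m A *m ones F s) ord0 ord0.

Definition Amat (F : fieldType) (cj : F -> F) n q m
  (alpha : 'I_n -> 'I_q -> 'I_m -> F) (k : 'I_m) : 'M[F]_(n, q) :=
  \matrix_(i, j) cj (alpha i j k).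

Definition Bmat (F : fieldType) n q m
  (beta : 'I_m -> 'I_n -> 'I_q -> F) (k : 'I_m) : 'M[F]_(n, q) :=
  \matrix_(i, j) beta k i j.

Definition Hmat (F : fieldType) (cj : F -> F) n q m
  (beta : 'I_m -> 'I_n -> 'I_q -> F) (Ls : 'I_m -> 'M[F]_(n, q)) : 'M[F]_m :=
  \matrix_(k, l) sandwich cj (hadamard (Bmat beta k) (cbar cj (Ls l))).

Definition Phimat (F : fieldType) (cj : F -> F) n q m
  (beta : 'I_m -> 'I_n -> 'I_q -> F) (alpha' : 'I_n -> 'I_q -> 'I_m -> F) : 'M[F]_m :=
  \matrix_(k, l) sandwich cj (hadamard (Bmat beta k) (cbar cj (Amat cj alpha' l))).

Definition theorem1p2_over (F : fieldType) (cj : F -> F) : Prop :=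
  forall (q n : nat) (L : {linear 'M[F]_q -> 'M[F]_n}) (Lmat : 'M[F]_(n * n, q * q)),
  is_matricization L Lmat ->
  star_linear cj L ->
  forall m : nat, m = \rank (choi L) ->
  forall (Ls Ls' : 'I_m -> 'M[F]_(n, q)),
  (<<[seq Ls k | k <- enum 'I_m]>> =
     <<[seq mblock Lmat i j | i <- enum 'I_n, j <- enum 'I_q]>>)%VS ->
  (<<[seq Ls' k | k <- enum 'I_m]>> =
     <<[seq mblock Lmat i j | i <- enum 'I_n, j <- enum 'I_q]>>)%VS ->
  forall (alpha alpha' : 'I_n -> 'I_q -> 'I_m -> F)
         (beta beta' : 'I_m -> 'I_n -> 'I_q -> F),
  (forall i j, mblock Lmat i j = \sum_(k < m) alpha i j k *: Ls k) ->
  (forall k, Ls k = \sum_(i < n) \sum_(j < q) beta k i j *: mblock Lmat i j) ->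
  (forall i j, mblock Lmat i j = \sum_(k < m) alpha' i j k *: Ls' k) ->
  (forall k, Ls' k = \sum_(i < n) \sum_(j < q) beta' k i j *: mblock Lmat i j) ->
  let Phi := Phimat cj beta alpha' in
  [/\ Phi \in unitmx,
      stack Ls = (Phi *t 1%:M) *m stack Ls',
      (cadj cj Phi *t 1%:M) *m stack (Amat cj alpha) = stack (Amat cj alpha') &
      Hmat cj beta Ls = Phi *m Hmat cj beta' Ls' *m cadj cj Phi].

(* Main.v *)
Require Import Defs.
From HB Require Import structures.
From mathcomp Require Import all_boot all_order all_algebra.
From mathcomp Require Import mxtens.
Import Order.TTheory GRing.Theory Num.Theory.
Local Open Scope ring_scope.
Set Implicit Arguments. Unset Strict Implicit.

Lemma sum_tens (R : nmodType) m n (G : 'I_(m*n) -> R) :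
  \sum_(s < m*n) G s = \sum_(i < m) \sum_(j < n) G (mxtens_index (i, j)).
Proof.
rewrite pair_big /=.
rewrite (reindex (@mxtens_index m n)) /=; last first.
  by exists (@mxtens_unindex m n) => x _; rewrite (mxtens_indexK, mxtens_unindexK).
by apply: eq_bigr => [[i j]] _.
Qed.

Lemma sum_delta (R : pzSemiRingType) n (a : 'I_n) (f : 'I_n -> R) :
  \sum_(a' < n) (a == a')%:R * f a' = f a.
Proof.
rewrite (bigD1 a) //= eqxx mul1r big1 ?addr0 // => a' /negPf.
by rewrite eq_sym => ->; rewrite mul0r.
Qed.

Lemma sum_delta' (R : pzSemiRingType) n (a : 'I_n) (f : 'I_n -> R) :
  \sum_(a' < n) f a' * (a == a')%:R = f a.
Proof.
rewrite (bigD1 a) //= eqxx mulr1 big1 ?addr0 // => a' /negPf.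
by rewrite eq_sym => ->; rewrite mulr0.
Qed.

Section Gen.
Variables (F : fieldType) (cj : F -> F).
Hypotheses (cj0 : cj 0 = 0) (cj1 : cj 1 = 1) (cjD : {morph cj : x y / x + y})
  (cjM : {morph cj : x y / x * y}) (cjK : involutive cj).

Lemma cj_sum I (r : seq I) (P : pred I) (f : I -> F) :
  cj (\sum_(i <- r | P i) f i) = \sum_(i <- r | P i) cj (f i).
Proof. exact: (big_morph cj cjD cj0). Qed.

Lemma sandwichE r s (A : 'M[F]_(r, s)) :
  sandwich cj A = \sum_(i < r) \sum_(j < s) A i j.
Proof.
rewrite /sandwich !mxE exchange_big /=; apply: eq_bigr => j _.
rewrite !mxE mulr1; apply: eq_bigr => i _.
by rewrite !mxE cj1 mul1r.
Qed.

Lemma cadj_delta q (b j : 'I_q) : cadj cj (delta_mx b j) = delta_mx j b.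
Proof.
apply/matrixP => x y; rewrite !mxE.
by case: (x == j); case: (y == b); rewrite /= ?cj0 ?cj1.
Qed.

End Gen.
Lemma exch22 (R : nmodType) (I J K M : finType) (f : I -> J -> K -> M -> R) :
  \sum_i \sum_j \sum_k \sum_l f i j k l = \sum_k \sum_l \sum_i \sum_j f i j k l.
Proof.
rewrite pair_big /=.
under eq_bigr do rewrite pair_big /=.
rewrite exchange_big /=.
rewrite [RHS]pair_big /=.
apply: eq_bigr => [[k l]] _ /=.
by rewrite pair_big.
Qed.

Lemma sum_delta2 (R : pzSemiRingType) n q (j : 'I_n) (b : 'I_q) (f : 'I_n -> 'I_q -> R) :
  \sum_(j' < n) \sum_(b' < q) f j' b' * ((b' == b) && (j' == j))%:R = f j b.
Proof.
rewrite (bigD1 j) //= [X in _ + X = _]big1 => [|j' /negPf nj]; last first.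
  by apply: big1 => b' _; rewrite nj andbF mulr0.
rewrite addr0 (bigD1 b) //= !eqxx mulr1 big1 ?addr0 // => b' /negPf ->.
by rewrite mulr0.
Qed.

Section Ent.
Variables (F : fieldType) (cj : F -> F).
Hypotheses (cj0 : cj 0 = 0) (cj1 : cj 1 = 1).
Variables (q n : nat) (L : {linear 'M[F]_q -> 'M[F]_n}) (Lmat : 'M[F]_(n * n, q * q)).
Hypotheses (HM : is_matricization L Lmat) (Hs : star_linear cj L).

Lemma Bent i j a b : mblock Lmat i j a b = L (delta_mx b j) a i.
Proof.
have := congr1 (fun M : 'cV[F]_(n * n) => M (mxtens_index (i,a)) ord0) (HM (delta_mx b j)).
rewrite /= ![in RHS]mxE mxtens_indexK /= => <-.
rewrite !mxE sum_tens -(sum_delta2 j b (fun j' b' => Lmat (mxtens_index (i, a)) (mxtens_index (j', b')))).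
apply: eq_bigr => j' _; apply: eq_bigr => b' _.
by rewrite !mxE mxtens_indexK.
Qed.

Lemma Bsym i j a b : cj (mblock Lmat i j a b) = mblock Lmat a b i j.
Proof.
rewrite !Bent -[delta_mx j b](cadj_delta cj0 cj1) Hs.
by rewrite /cadj !mxE.
Qed.

Lemma choiE i j a b : choi L (mxtens_index (b, a)) (mxtens_index (j, i)) = mblock Lmat i j a b.
Proof. by rewrite Bent !mxE !mxtens_indexK. Qed.

End Ent.

Lemma indep (F : fieldType) q n m (B : 'I_n -> 'I_q -> 'M[F]_(n, q))
  (C : 'M[F]_(q * n)) (Ls : 'I_m -> 'M[F]_(n, q)) (alpha : 'I_n -> 'I_q -> 'I_m -> F) :
  (forall i j a b, C (mxtens_index (b, a)) (mxtens_index (j, i)) = B i j a b) ->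
  (forall i j, B i j = \sum_(k < m) alpha i j k *: Ls k) ->
  m = \rank C ->
  forall c : 'I_m -> F, \sum_(k < m) c k *: Ls k = 0 -> forall k, c k = 0.
Proof.
move=> CE HA Hm c Hc k.
pose Lrow : 'M[F]_(m, q * n) := \matrix_(k, s) Ls k (mxtens_unindex s).2 (mxtens_unindex s).1.
pose Aa : 'M[F]_(q * n, m) := \matrix_(r, k) alpha (mxtens_unindex r).2 (mxtens_unindex r).1 k.
have E : C^T = Aa *m Lrow.
  apply/matrixP => r s; rewrite -[r](@mxtens_unindexK q n) -[s](@mxtens_unindexK q n).
  case: (mxtens_unindex r) => j i; case: (mxtens_unindex s) => b a.
  rewrite mxE CE HA summxE !mxE; apply: eq_bigr => k' _.
  by rewrite !mxE !mxtens_indexK.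
have rk : row_free Lrow.
  rewrite /row_free eqn_leq rank_leq_row /= {1}Hm -mxrank_tr E.
  exact: mxrankM_maxr.
have : (\row_k c k) *m Lrow = 0 *m Lrow.
  rewrite mul0mx; apply/matrixP => x s; rewrite -[s](@mxtens_unindexK q n); case: (mxtens_unindex s) => b a.
  rewrite [RHS]mxE; transitivity ((\sum_(k < m) c k *: Ls k) a b); last by rewrite Hc mxE.
  rewrite mxE summxE; apply: eq_bigr => k' _; by rewrite !mxE mxtens_indexK.
move/(row_free_inj rk)/matrixP/(_ ord0 k).
by rewrite !mxE.
Qed.

Lemma uniq_coef (F : fieldType) q n m (B : 'I_n -> 'I_q -> 'M[F]_(n, q))
  (C : 'M[F]_(q * n)) (Ls : 'I_m -> 'M[F]_(n, q)) (alpha : 'I_n -> 'I_q -> 'I_m -> F) :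
  (forall i j a b, C (mxtens_index (b, a)) (mxtens_index (j, i)) = B i j a b) ->
  (forall i j, B i j = \sum_(k < m) alpha i j k *: Ls k) ->
  m = \rank C ->
  forall c d : 'I_m -> F,
  (forall a b, \sum_(k < m) c k * Ls k a b = \sum_(k < m) d k * Ls k a b) ->
  forall k, c k = d k.
Proof.
move=> CE HA Hm c d H k; apply/eqP; rewrite -subr_eq0; apply/eqP.
apply: (indep CE HA Hm (c := fun k => c k - d k)).
apply/matrixP => a b; rewrite summxE !mxE.
under eq_bigr do rewrite !mxE mulrBl.
by rewrite sumrB H subrr.
Qed.


Lemma changeL (F : comPzRingType) n q m (B : 'I_n -> 'I_q -> 'M[F]_(n,q))
  (X Y : 'I_m -> 'M[F]_(n,q)) (bt : 'I_m -> 'I_n -> 'I_q -> F) (al : 'I_n -> 'I_q -> 'I_m -> F) :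
  (forall k a b, X k a b = \sum_(i < n) \sum_(j < q) bt k i j * B i j a b) ->
  (forall i j a b, B i j a b = \sum_(l < m) al i j l * Y l a b) ->
  forall k a b, X k a b = \sum_(l < m) (\sum_(i < n) \sum_(j < q) bt k i j * al i j l) * Y l a b.
Proof.
move=> HX HY k a b; rewrite HX.
under eq_bigr do under eq_bigr do rewrite HY mulr_sumr.
under [RHS]eq_bigr do (rewrite mulr_suml; under eq_bigr do rewrite mulr_suml).
rewrite [RHS]exchange_big; apply: eq_bigr => i _.
rewrite [RHS]exchange_big; apply: eq_bigr => j _.
by apply: eq_bigr => l _; rewrite mulrA.
Qed.

Lemma tens1_mulE (F : fieldType) m n p (P : 'M[F]_m) (X : 'I_m -> 'M[F]_(n,p)) k a c :
  ((P *t 1%:M) *m stack X) (mxtens_index (k, a)) c = \sum_(l < m) P k l * X l a c.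
Proof.
rewrite mxE sum_tens; apply: eq_bigr => l _.
under eq_bigr do rewrite !mxE !mxtens_indexK /= mulrAC.
exact: (sum_delta' a (fun i => P k l * X l i c)).
Qed.

Lemma main_gen (F : fieldType) (cj : F -> F) (cj0 : cj 0 = 0) (cj1 : cj 1 = 1)
  (cjD : {morph cj : x y / x + y}) (cjM : {morph cj : x y / x * y}) (cjK : involutive cj) :
  theorem1p2_over cj.
Proof.
move=> q n L Lmat HM Hs m Hm Ls Ls' _ _ alpha alpha' beta beta' HA HB HA' HB' Phi.
have CE := choiE HM.
have Sy := Bsym cj0 cj1 HM Hs.
have UL := uniq_coef CE HA Hm.
have UL' := uniq_coef CE HA' Hm.
have ent : forall (N : nat) (c : 'I_N -> F) (X : 'I_N -> 'M[F]_(n, q)) a b,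
    (\sum_(k < N) c k *: X k) a b = \sum_(k < N) c k * X k a b.
  by move=> N c X a b; rewrite summxE; apply: eq_bigr => k _; rewrite mxE.
have HAe : forall i j a b, mblock Lmat i j a b = \sum_(k < m) alpha i j k * Ls k a b.
  by move=> i j a b; rewrite HA ent.
have HA'e : forall i j a b, mblock Lmat i j a b = \sum_(k < m) alpha' i j k * Ls' k a b.
  by move=> i j a b; rewrite HA' ent.
have ent2 : forall (c : 'I_n -> 'I_q -> F) a b,
    (\sum_(i < n) \sum_(j < q) c i j *: mblock Lmat i j) a b =
    \sum_(i < n) \sum_(j < q) c i j * mblock Lmat i j a b.
  move=> c a b; rewrite summxE; apply: eq_bigr => i _; exact: ent.
have HBe : forall k a b, Ls k a b = \sum_(i < n) \sum_(j < q) beta k i j * mblock Lmat i j a b.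
  by move=> k a b; rewrite HB ent2.
have HB'e : forall k a b, Ls' k a b = \sum_(i < n) \sum_(j < q) beta' k i j * mblock Lmat i j a b.
  by move=> k a b; rewrite HB' ent2.
have PhiE : forall k l, Phi k l = \sum_(i < n) \sum_(j < q) beta k i j * alpha' i j l.
  move=> k l; rewrite /Phi /Phimat mxE sandwichE //.
  by apply: eq_bigr => i _; apply: eq_bigr => j _; rewrite !mxE cjK.
have C2 : forall k a b, Ls k a b = \sum_(l < m) Phi k l * Ls' l a b.
  move=> k a b; rewrite (changeL HBe HA'e); apply: eq_bigr => l _; by rewrite PhiE.
pose Phi' : 'M[F]_m := \matrix_(k, l) \sum_(i < n) \sum_(j < q) beta' k i j * alpha i j l.
have C2' : forall k a b, Ls' k a b = \sum_(l < m) Phi' k l * Ls l a b.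
  move=> k a b; rewrite (changeL HB'e HAe); apply: eq_bigr => l _; by rewrite mxE.
have PP : Phi *m Phi' = 1%:M.
  apply/matrixP => k k'; move: k'; apply: (UL (fun k' => (Phi *m Phi') k k')) => a b.
  under [RHS]eq_bigr do rewrite mxE.
  rewrite (sum_delta k (fun k' => Ls k' a b)).
  under eq_bigr do rewrite mxE mulr_suml.
  rewrite exchange_big C2; apply: eq_bigr => l _.
  by rewrite C2' mulr_sumr; apply: eq_bigr => k' _; rewrite mulrA.
have C3 : forall i j l, alpha' i j l = \sum_(k < m) alpha i j k * Phi k l.
  move=> i j; apply: UL' => a b; rewrite -HA'e HAe.
  under [RHS]eq_bigr do rewrite mulr_suml.
  rewrite exchange_big; apply: eq_bigr => k _.
  by rewrite C2 mulr_sumr; apply: eq_bigr => l _; rewrite mulrA.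
split.
- by case: (mulmx1_unit PP).
- apply/matrixP => r c; rewrite -[r](@mxtens_unindexK m n).
  case: (mxtens_unindex r) => k a.
  by rewrite tens1_mulE mxE mxtens_indexK /= C2.
- apply/matrixP => r c; rewrite -[r](@mxtens_unindexK m n).
  case: (mxtens_unindex r) => l i.
  rewrite tens1_mulE mxE mxtens_indexK /= !mxE C3 cj_sum //.
  by apply: eq_bigr => k _; rewrite !mxE cjM mulrC.
have HE : forall (bt : 'I_m -> 'I_n -> 'I_q -> F) (X : 'I_m -> 'M[F]_(n, q)) k l,
    Hmat cj bt X k l = \sum_(i < n) \sum_(j < q) bt k i j * cj (X l i j).
  move=> bt X k l; rewrite mxE sandwichE //.
  by apply: eq_bigr => i _; apply: eq_bigr => j _; rewrite !mxE.
have K : forall (g d : 'I_n -> 'I_q -> F),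
    \sum_(i < n) \sum_(j < q) g i j * cj (\sum_(a < n) \sum_(b < q) d a b * mblock Lmat a b i j) =
    \sum_(a < n) \sum_(b < q) cj (d a b) * (\sum_(i < n) \sum_(j < q) g i j * mblock Lmat i j a b).
  move=> g d.
  under eq_bigr do under eq_bigr do (rewrite cj_sum // mulr_sumr;
     under eq_bigr do rewrite cj_sum // mulr_sumr).
  under eq_bigr do under eq_bigr do under eq_bigr do under eq_bigr do rewrite cjM Sy mulrCA.
  rewrite exch22; apply: eq_bigr => a _; apply: eq_bigr => b _.
  rewrite mulr_sumr; apply: eq_bigr => i _; rewrite mulr_sumr; apply: eq_bigr => j _.
  by [].
apply/matrixP => k l.
pose G k' := \sum_(a < n) \sum_(b < q) cj (beta l a b) * Ls' k' a b.
have F1 : Hmat cj beta Ls k l = \sum_(k' < m) Phi k k' * G k'.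
  rewrite HE.
  under eq_bigr do under eq_bigr do rewrite (HBe l).
  rewrite K.
  under eq_bigr do under eq_bigr do rewrite -HBe C2 mulr_sumr.
  rewrite /G.
  under [RHS]eq_bigr do (rewrite mulr_sumr; under eq_bigr do rewrite mulr_sumr).
  rewrite [RHS]exchange_big; apply: eq_bigr => a _.
  rewrite [RHS]exchange_big; apply: eq_bigr => b _.
  by apply: eq_bigr => k' _; rewrite mulrCA.
have F2 : forall k', \sum_(l' < m) cj (Phi l l') * Hmat cj beta' Ls' k' l' = G k'.
  move=> k'; rewrite /G.
  under [RHS]eq_bigr do under eq_bigr do rewrite HB'e.
  rewrite -K.
  under [RHS]eq_bigr do under eq_bigr do rewrite -HBe C2 cj_sum // mulr_sumr.
  under [LHS]eq_bigr do rewrite HE mulr_sumr.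
  rewrite [LHS]exchange_big; apply: eq_bigr => i _.
  under [LHS]eq_bigr do rewrite mulr_sumr.
  rewrite [LHS]exchange_big; apply: eq_bigr => j _.
  by apply: eq_bigr => l' _; rewrite cjM mulrCA.
rewrite F1 !mxE.
under [RHS]eq_bigr do rewrite !mxE mulr_suml.
rewrite [RHS]exchange_big; apply: eq_bigr => k' _.
rewrite -F2 mulr_sumr; apply: eq_bigr => l' _.
by rewrite !mxE mulrAC mulrA.
Qed.

Theorem theorem1p2 :
  (forall R : realFieldType, theorem1p2_over (@id R)) /\
  (forall C : numClosedFieldType, theorem1p2_over (fun z : C => z^*)).
Proof.
split.
- move=> R; exact: (@main_gen R (@id R)).
- move=> C; apply: main_gen.
  + exact: rmorph0.
  + exact: rmorph1.
  + exact: rmorphD.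
  + exact: rmorphM.
  + exact: conjCK.
Qed.
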